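(* Let $(W,V)$ be an independent-type $\mathcal Y$-valued transition matrix on $\mathcal X$ with $W$ irreducible and invertible, and let $P$ be a distribution on $\mathcal X$. Then $$\mathcal L^I_{2,W,V}=\big\{([W,A],0)\in\mathcal G^I:\ A\in M_d(\mathbb R),\ A^Tu_{\mathcal X}=0,\ [I_{S(V)_x},A]=0\ \forall x\in\mathcal X\big\},$$ $$\mathcal L^I_{2,P,W,V}=\big\{([W,A],0)\in\mathcal G^I:\ A\in M_d(\mathbb R),\ A^Tu_{\mathcal X}=0,\ AP=0,\ [I_{S(V)_x},A]=0\ \forall x\in\mathcal X\big\},$$ where $0$ denotes the tuple $C$ with all $C_y=0$ and $[X,Y]=XY-YX$.
   Context: Let $\mathcal X=\{1,\dots,d\}$, $\mathcal Y=\{1,\dots,d_Y\}$, $u_{\mathcal X}\in\mathbb R^{\mathcal X}$ the all-ones vector. An independent-type $\mathcal Y$-valued transition matrix $(W,V)$ consists of a column-stochastic $d\times d$ matrix $W(x|x')$ and a transition matrix $V$ from $\mathcal X$ to $\mathcal Y$ ($V(y|x')\ge0$, $\sum_yV(y|x')=1$), defining $W_y:=WD(V_y)$, where $V_y\in\mathbb R^{\mathcal X}$, $V_y(x')=V(y|x')$, and $D(v)$ is the diagonal matrix with diagonal $v$. For $x\in\mathcal X$, $V_{*,x}\in\mathbb R^{\mathcal Y}$ is $V_{*,x}(y)=V(y|x)$, $S(V)_x:=\{x'\in\mathcal X: V_{*,x'}=V_{*,x}\}$, and $I_S$ is the diagonal $0/1$ matrix projecting onto the coordinates in $S$. $\mathcal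 G^I$ is the set of pairs $(B,C)$ with $B$ a real $d\times d$ matrix vanishing wherever $W(x|x')=0$ and $C=(C_y)_{y\in\mathcal Y}$, $C_y\in\mathbb R^{\mathcal X}$, $C_y(x')=0$ wherever $V(y|x')=0$. $\mathcal L^I_{1,W,V}:=\{(B,C)\in\mathcal G^I: B^Tu_{\mathcal X}=0,\ \sum_yC_y=0\}$. Let $\mathcal L_2:=\{(W_yA-AW_y)_{y\in\mathcal Y}: A\in M_d(\mathbb R),\ A^Tu_{\mathcal X}=0\}$ and $\mathcal L_{2,P}:=\{(W_yA-AW_y)_{y}: A^Tu_{\mathcal X}=0,\ AP=0\}$. Then $\mathcal L^I_{2,W,V}:=\{(B,C)\in\mathcal L^I_{1,W,V}: (BD(V_y)+WD(C_y))_{y}\in\mathcal L_2\}$ and $\mathcal L^I_{2,P,W,V}:=\{(B,C)\in\mathcal L^I_{1,W,V}:(BD(V_y)+WD(C_y))_y\in\mathcal L_{2,P}\}$. *)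

(* Defs.v *)
From HB Require Import structures.
From mathcomp Require Import all_boot all_order all_algebra.
Set Implicit Arguments. Unset Strict Implicit. Unset Printing Implicit Defensive.
Import Order.TTheory GRing.Theory Num.Theory.
Local Open Scope ring_scope.

Section Defs.
Variable R : realFieldType.
Variables d dY : nat.
(* X = 'I_d, Y = 'I_dY.  W x x' = W(x|x'),  V y x' = V(y|x'),  C y x' = C_y(x'). *)

Definition column_stochastic (W : 'M[R]_d) : Prop :=
  (forall x x', 0 <= W x x') /\ (forall x', \sum_(x < d) W x x' = 1).

Definition transition_XY (V : 'M[R]_(dY, d)) : Prop :=
  (forall y x', 0 <= V y x') /\ (forall x', \sum_(y < dY) V y x' = 1).

Definition irreducible (W : 'M[R]_d) : Prop :=
  forall x x', exists k : nat, 0 < (W ^+ k) x x'.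

Definition distribution (P : 'cV[R]_d) : Prop :=
  (forall x, 0 <= P x 0) /\ \sum_(x < d) P x 0 = 1.

Definition uX : 'cV[R]_d := const_mx 1.

Definition Dg (v : 'rV[R]_d) : 'M[R]_d := diag_mx v.

Definition Wy (W : 'M[R]_d) (V : 'M[R]_(dY, d)) (y : 'I_dY) : 'M[R]_d :=
  W *m Dg (row y V).

Definition comm (X Y : 'M[R]_d) : 'M[R]_d := X *m Y - Y *m X.

Definition SV (V : 'M[R]_(dY, d)) (x : 'I_d) : {set 'I_d} :=
  [set x' | col x' V == col x V].

Definition Iproj (S : {set 'I_d}) : 'M[R]_d :=
  diag_mx (\row_(i < d) (if i \in S then 1 else 0)).

Definition inGI (W : 'M[R]_d) (V : 'M[R]_(dY, d))
  (B : 'M[R]_d) (C : 'M[R]_(dY, d)) : Prop :=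
  (forall x x', W x x' = 0 -> B x x' = 0) /\
  (forall y x', V y x' = 0 -> C y x' = 0).

Definition inL1 W V B C : Prop :=
  inGI W V B C /\ B^T *m uX = 0 /\ \sum_(y < dY) row y C = 0.

Definition inL2 W V (F : 'I_dY -> 'M[R]_d) : Prop :=
  exists A : 'M[R]_d, A^T *m uX = 0 /\
    forall y, F y = Wy W V y *m A - A *m Wy W V y.

Definition inL2P (P : 'cV[R]_d) W V (F : 'I_dY -> 'M[R]_d) : Prop :=
  exists A : 'M[R]_d, A^T *m uX = 0 /\ A *m P = 0 /\
    forall y, F y = Wy W V y *m A - A *m Wy W V y.

Definition fam W V (B : 'M[R]_d) (C : 'M[R]_(dY, d)) (y : 'I_dY) : 'M[R]_d :=
  B *m Dg (row y V) + W *m Dg (row y C).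

Definition inL2I W V B C : Prop := inL1 W V B C /\ inL2 W V (fam W V B C).
Definition inL2PI P W V B C : Prop := inL1 W V B C /\ inL2P P W V (fam W V B C).

End Defs.

(* Main.v *)
Require Import Defs.
From HB Require Import structures.
From mathcomp Require Import all_boot all_order all_algebra.
Import Order.TTheory GRing.Theory Num.Theory.
Local Open Scope ring_scope.

Section Aux.
Variable R : realFieldType.
Variables d dY : nat.
Implicit Types (A B : 'M[R]_d) (V C : 'M[R]_(dY, d)).

Lemma zm (M : zmodType) (a b c e : M) : a + c - e = a - b + c - (e - b).
Proof. by rewrite opprB addrA -(addrA (a - b)) (addrC c) addrA subrK addrAC. Qed.

Lemma eAD A (v : 'rV[R]_d) i j : (A *m diag_mx v) i j = A i j * v 0 j.
Proof. by rewrite mul_mx_diag mxE. Qed.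

Lemma eDA A (v : 'rV[R]_d) i j : (diag_mx v *m A) i j = v 0 i * A i j.
Proof. by rewrite mul_diag_mx mxE. Qed.

Lemma sumD V : transition_XY V -> \sum_(y < dY) Dg (row y V) = 1%:M.
Proof.
move=> [_ HV]; apply/matrixP => i j; rewrite summxE !mxE.
case: eqVneq => [->|ne].
  rewrite -(HV j); apply: eq_bigr => y _; by rewrite !mxE eqxx mulr1n.
by apply: big1 => y _; rewrite !mxE (negbTE ne) mulr0n.
Qed.

Lemma Aij0 A V i j : col j V != col i V ->
  (forall y, A i j * (V y j - V y i) = 0) -> A i j = 0.
Proof.
move=> ne H; apply/eqP; apply: contraR ne => nz; apply/eqP/matrixP => y k.
rewrite !mxE; have /eqP := H y; rewrite mulf_eq0 (negbTE nz) /= subr_eq0.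
by move/eqP.
Qed.

Lemma fwd W V B C A : transition_XY V -> W \in unitmx ->
  inL1 W V B C -> (forall y, fam W V B C y = Wy W V y *m A - A *m Wy W V y) ->
  C = 0 /\ (forall x, comm (@Iproj R d (SV V x)) A = 0) /\ B = comm W A.
Proof.
move=> HV Wu [_ [_ sC]] H.
have sC' : \sum_(y < dY) Dg (row y C) = 0 by rewrite /Dg -raddf_sum sC raddf0.
have EB : B = comm W A.
  have E : \sum_(y < dY) fam W V B C y = \sum_(y < dY) (Wy W V y *m A - A *m Wy W V y).
    by apply: eq_bigr => y _; exact: H.
  move: E.
  rewrite /fam big_split /= -!mulmx_sumr (sumD V HV) sC' mulmx0 addr0 mulmx1 => ->.
  rewrite big_split /= sumrN /Wy -mulmx_suml -!mulmx_sumr (sumD V HV) mulmx1.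
  by rewrite /comm.
have X0 : forall y, A *m Dg (row y V) + Dg (row y C) - Dg (row y V) *m A = 0.
  move=> y; have := H y; rewrite /fam /Wy EB /comm => Hy.
  have : W *m (A *m Dg (row y V) + Dg (row y C) - Dg (row y V) *m A) = 0.
    rewrite mulmxBr mulmxDr !mulmxA.
    move: Hy; rewrite mulmxBl !mulmxA => Hy.
    by rewrite (zm _ _ (A *m W *m Dg (row y V))) Hy subrr.
  by move=> /(congr1 (mulmx (invmx W))); rewrite mulKmx // mulmx0.
have e : forall y i j, A i j * V y j + (C y i *+ (i == j)) - V y i * A i j = 0.
  move=> y i j; move: (X0 y); rewrite /Dg mul_mx_diag mul_diag_mx => /matrixP /(_ i j).
  by rewrite !mxE.
have CZ : C = 0.
  apply/matrixP => y j; have := e y j j; rewrite eqxx mulr1n mxE.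
  by rewrite mulrC addrAC subrr add0r.
have AV : forall y i j, A i j * (V y j - V y i) = 0.
  move=> y i j; have := e y i j; rewrite CZ mxE mul0rn addr0.
  by rewrite mulrBr [V y i * _]mulrC.
split => //; split => // x.
rewrite /comm /Iproj mul_mx_diag mul_diag_mx; apply/matrixP => i j; rewrite !mxE.
have key : forall i j, i \in SV V x -> j \notin SV V x -> A i j = 0 /\ A j i = 0.
  move=> i' j' Hi Hj; move: Hi Hj; rewrite !inE => /eqP Hi Hj.
  have ne : col j' V != col i' V by rewrite Hi.
  have ne' : col i' V != col j' V by rewrite eq_sym.
  by split; [apply: (@Aij0 A V _ _ ne) | apply: (@Aij0 A V _ _ ne')] => y; rewrite AV.
case: (boolP (i \in SV V x)) => Hi; case: (boolP (j \in SV V x)) => Hj;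
  rewrite ?mulr1 ?mul1r ?mulr0 ?mul0r ?subrr ?subr0 ?sub0r //.
- by rewrite (key i j Hi Hj).1.
- by rewrite (key j i Hj Hi).2 oppr0.
Qed.

Lemma WTu W : column_stochastic W -> W^T *m @uX R d = @uX R d.
Proof.
move=> [_ HW]; apply/matrixP => i k; rewrite !mxE -(HW i).
by apply: eq_bigr => j _; rewrite !mxE mulr1.
Qed.

Lemma bwd W V A : column_stochastic W -> A^T *m @uX R d = 0 ->
  (forall x, comm (@Iproj R d (SV V x)) A = 0) ->
  (comm W A)^T *m @uX R d = 0 /\
  (forall y, fam W V (comm W A) 0 y = Wy W V y *m A - A *m Wy W V y).
Proof.
move=> HW HA HI; split.
  by rewrite /comm linearB /= !trmx_mul mulmxBl -!mulmxA (WTu W HW) HA mulmx0 subrr.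
move=> y.
have AD : A *m Dg (row y V) = Dg (row y V) *m A.
  rewrite /Dg mul_mx_diag mul_diag_mx; apply/matrixP => i j; rewrite !mxE.
  have [->|ne] := eqVneq (V y i) (V y j); first by rewrite mulrC.
  suff -> : A i j = 0 by rewrite mulr0 mul0r.
  move: (HI i); rewrite /comm /Iproj mul_mx_diag mul_diag_mx => /matrixP /(_ i j).
  rewrite !mxE !inE eqxx mul1r.
  have -> : (col j V == col i V) = false.
    apply/negbTE; apply: contra ne => /eqP/matrixP/(_ y 0).
    by rewrite !mxE => ->.
  by rewrite mulr0 subr0.
rewrite /fam /Wy /comm row0 /Dg raddf0 mulmx0 addr0 mulmxBl.
by rewrite -!mulmxA -/(Dg _) AD !mulmxA.
Qed.
End Aux.

Theorem corollary2 (R : realFieldType) (d dY : nat)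
  (W : 'M[R]_d) (V : 'M[R]_(dY, d)) (P : 'cV[R]_d)
  (HW : column_stochastic W) (HV : transition_XY V)
  (Hirr : irreducible W) (Hinv : W \in unitmx)
  (HP : distribution P) :
  (forall (B : 'M[R]_d) (C : 'M[R]_(dY, d)),
     inL2I W V B C <->
     (inGI W V B C /\ C = 0 /\
      exists A : 'M[R]_d, A^T *m @uX R d = 0 /\
        (forall x, comm (@Iproj R d (SV V x)) A = 0) /\ B = comm W A))
  /\
  (forall (B : 'M[R]_d) (C : 'M[R]_(dY, d)),
     inL2PI P W V B C <->
     (inGI W V B C /\ C = 0 /\
      exists A : 'M[R]_d, A^T *m @uX R d = 0 /\ A *m P = 0 /\
        (forall x, comm (@Iproj R d (SV V x)) A = 0) /\ B = comm W A)).
Proof.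
have S0 : \sum_(y < dY) row y (0 : 'M[R]_(dY, d)) = 0.
  by apply: big1 => y _; rewrite row0.
split=> B C; split.
- move=> [H1 [A [HA HF]]].
  have [CZ [HI EB]] := @fwd _ _ _ W V B C A HV Hinv H1 HF.
  by split; [exact: H1.1 | split=> //; exists A].
- move=> [HG [CZ [A [HA [HI EB]]]]]; subst B C.
  have [HT HF] := @bwd _ _ _ W V A HW HA HI.
  by split; [split=> // | exists A].
- move=> [H1 [A [HA [HAP HF]]]].
  have [CZ [HI EB]] := @fwd _ _ _ W V B C A HV Hinv H1 HF.
  by split; [exact: H1.1 | split=> //; exists A].
- move=> [HG [CZ [A [HA [HAP [HI EB]]]]]]; subst B C.
  have [HT HF] := @bwd _ _ _ W V A HW HA HI.
  by split; [split=> // | exists A].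
Qed.
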